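(* Let $\mathcal M$ be a structural causal model with causal diagram $G$, containing a binary treatment $X$ (values $x,x'$), a binary outcome $Y$ (values $y,y'$), a set of discrete variables $C$ containing no descendant of $X$ in $G$, and a set of discrete variables $Z$ such that for all $x\ne x'$ in the range of $X$, $Y_x$ is independent of $(X, Z_{x'})$ conditionally on $(Z_x,C)$. Fix $c$ with $P(c)>0$ and $\beta,\gamma,\theta,\delta\in\mathbb R$, and let $$f(c)=\beta P(y_x,y'_{x'}\mid c)+\gamma P(y_x,y_{x'}\mid c)+\theta P(y'_x,y'_{x'}\mid c)+\delta P(y_{x'},y'_x\mid c).$$ Define $\sigma=\beta-\gamma-\theta+\delta$, $W=(\gamma-\delta)P(y_x\mid c)+\delta P(y_{x'}\mid c)+\theta P(y'_{x'}\mid c)$, $$L=\max\{0,\ P(y_x\mid c)-P(y_{x'}\mid c),\ P(y\mid c)-P(y_{x'}\mid c),\ P(y_x\mid c)-P(y\mid c)\},$$ $$U=\min\Big\{P(y_x\mid c),\ P(y'_{x'}\mid c),\ P(y,x\mid c)+P(y',x'\mid c),\ P(y_x\mid c)-P(y_{x'}\mid c)+P(y,x'\mid c)+P(y',x\mid c),$$ $$\qquad \sum_z\sum_{z'}\min\{P(y\mid z,x,c),P(y'\mid z',x',c)\}\cdot\min\{P(z_x\mid c),P(z'_{x'}\mid c)\}\Big\},$$ where $z,z'$ range over values of $Z$ (with the conditional probabilities defined). Then $$W+\sigma U\le f(c)\le W+\sigma L\ \text{ if }\sigma<0,\qquad W+\sigma L\le f(c)\le W+\sigma U\ \text{ if 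}\sigma>0.$$
   Context: For a value $x$ of $X$, $Y_x$ and $Z_x$ denote the counterfactual variables ''the value $Y$ (resp. $Z$) would take had $X$ been set to $x$''; $y_x$ is the event $Y_x=y$, $z_x$ the event $Z_x=z$, $z'_{x'}$ the event $Z_{x'}=z'$. Unsubscripted probabilities such as $P(y\mid z,x,c)$, $P(y,x\mid c)$ are observational. Consistency: $X=x$ implies $Y_x=Y$ and $Z_x=Z$. *)

(* Defs.v *)
From mathcomp Require Import all_boot all_order all_algebra.
Set Implicit Arguments. Unset Strict Implicit. Unset Printing Implicit Defensive.
Import Order.TTheory GRing.Theory Num.Theory.
Local Open Scope ring_scope.

Section Prob.
Variables (R : realFieldType) (Omega : finType).

Definition is_dist (p : Omega -> R) : Prop :=
  (forall w, 0 <= p w) /\ \sum_(w : Omega) p w = 1.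

Definition Pr (p : Omega -> R) (A : pred Omega) : R := \sum_(w | A w) p w.

(* conditional probability P(A | B) = P(A,B)/P(B) (0 when P(B) = 0) *)
Definition cPr (p : Omega -> R) (A B : pred Omega) : R :=
  Pr p (predI A B) / Pr p B.

Definition cond_indep (TA TB TD : finType) (p : Omega -> R)
  (A : Omega -> TA) (B : Omega -> TB) (D : Omega -> TD) : Prop :=
  forall a b d,
    Pr p [pred w | (A w == a) && (B w == b) && (D w == d)] * Pr p [pred w | D w == d]
    = Pr p [pred w | (A w == a) && (D w == d)] * Pr p [pred w | (B w == b) && (D w == d)].

End Prob.

(* Main.v *)
Require Import Defs.
From mathcomp Require Import all_boot all_order all_algebra.
From mathcomp Require Import ring lra.
Import Order.TTheory GRing.Theory Num.Theory.
Local Open Scope ring_scope.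
Lemma Pr_ge0 (R : realFieldType) (Omega : finType) (p : Omega -> R) A :
  (forall w, 0 <= p w) -> 0 <= Pr p A.
Proof. by move=> h; apply: sumr_ge0 => w _; apply: h. Qed.

Lemma Pr_ext (R : realFieldType) (Omega : finType) (p : Omega -> R) (A B : pred Omega) :
  A =1 B -> Pr p A = Pr p B.
Proof. by move=> h; apply: eq_bigl. Qed.

Lemma Pr_sum (R : realFieldType) (Omega : finType) (p : Omega -> R) (A : pred Omega) :
  Pr p A = \sum_w p w * (A w)%:R.
Proof.
rewrite /Pr big_mkcond /=; apply: eq_bigr => w _.
by case: (A w); rewrite ?mulr1 ?mulr0.
Qed.

Lemma Pr_le (R : realFieldType) (Omega : finType) (p : Omega -> R) (A B : pred Omega) :
  (forall w, 0 <= p w) -> (forall w, A w -> B w) -> Pr p A <= Pr p B.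
Proof.
move=> h0 h; rewrite !Pr_sum; apply: ler_sum => w _; apply: ler_wpM2l => //.
by case: (A w) (h w) => [->|] //=; case: (B w).
Qed.

Lemma Pr_part (R : realFieldType) (Omega : finType) (p : Omega -> R) (T : finType)
  (A : pred Omega) (F : Omega -> T) :
  Pr p A = \sum_(z : T) Pr p [pred w | A w && (F w == z)].
Proof.
rewrite Pr_sum; under [RHS]eq_bigr do rewrite Pr_sum.
rewrite exchange_big /=; apply: eq_bigr => w _.
rewrite -mulr_sumr; congr (_ * _).
rewrite (bigD1 (F w)) //= eqxx andbT big1 ?addr0 //.
by move=> z hz; rewrite eq_sym (negbTE hz) andbF.
Qed.

Ltac bcase := rewrite /=; repeat match goal with |- context[?a == ?b] => case: (a == b) => //= end.
Lemma indep_step (R : realFieldType) (Omega : finType) (p : Omega -> R)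
  (TC TZ : finType) (X Y : Omega -> bool) (C : Omega -> TC) (Z : Omega -> TZ)
  (Yx : bool -> Omega -> bool) (Zx : bool -> Omega -> TZ) (c : TC)
  (x0 y0 : bool) (z0 z1 : TZ) :
  (forall w, 0 <= p w) ->
  (forall x w, X w = x -> Yx x w = Y w /\ Zx x w = Z w) ->
  cond_indep p (Yx x0) (fun w => (X w, Zx (~~x0) w)) (fun w => (Zx x0 w, C w)) ->
  0 < Pr p [pred w | (Z w == z0) && (X w == x0) && (C w == c)] ->
  Pr p [pred w | (Yx x0 w == y0) && (Zx x0 w == z0) && (Zx (~~x0) w == z1) && (C w == c)]
  * Pr p [pred w | (Z w == z0) && (X w == x0) && (C w == c)]
  = Pr p [pred w | (Y w == y0) && ((Z w == z0) && (X w == x0) && (C w == c))]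
  * Pr p [pred w | (Zx x0 w == z0) && (Zx (~~x0) w == z1) && (C w == c)].
Proof.
move=> p0 hcons hind ht.
set r := Pr p _. set t := Pr p _. set s := Pr p _. set m := Pr p _.
set u := Pr p [pred w | (Zx x0 w == z0) && (C w == c)].
set v := Pr p [pred w | (Yx x0 w == y0) && (Zx x0 w == z0) && (C w == c)].
have Eu : Pr p [pred w | (Zx x0 w, C w) == (z0, c)] = u.
  by apply: Pr_ext => w /=; rewrite xpair_eqE.
have Ev : Pr p [pred w | (Yx x0 w == y0) && ((Zx x0 w, C w) == (z0, c))] = v.
  by apply: Pr_ext => w /=; rewrite xpair_eqE andbA.
have H1 : r * u = v * m.
  have h1 := hind y0 (true, z1) (z0, c).
  have h2 := hind y0 (false, z1) (z0, c).
  rewrite /= Eu Ev in h1 h2.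
  have -> : r = Pr p [pred w | (Yx x0 w == y0) && ((X w, Zx (~~ x0) w) == (true, z1)) && ((Zx x0 w, C w) == (z0, c))]
     + Pr p [pred w | (Yx x0 w == y0) && ((X w, Zx (~~ x0) w) == (false, z1)) && ((Zx x0 w, C w) == (z0, c))].
    rewrite /r !Pr_sum -big_split; apply: eq_bigr => w _ /=; rewrite -mulrDr; congr (_ * _).
    rewrite /= !xpair_eqE; case: (X w); bcase; rewrite ?addr0 ?add0r //.
  have -> : m = Pr p [pred w | ((X w, Zx (~~ x0) w) == (true, z1)) && ((Zx x0 w, C w) == (z0, c))]
     + Pr p [pred w | ((X w, Zx (~~ x0) w) == (false, z1)) && ((Zx x0 w, C w) == (z0, c))].
    rewrite /m !Pr_sum -big_split; apply: eq_bigr => w _ /=; rewrite -mulrDr; congr (_ * _).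
    rewrite /= !xpair_eqE; case: (X w); bcase; rewrite ?addr0 ?add0r //.
  by rewrite mulrDl mulrDr h1 h2.
have H2 : s * u = v * t.
  have -> : s = \sum_(z : TZ) Pr p [pred w | (Yx x0 w == y0) && ((X w, Zx (~~ x0) w) == (x0, z)) && ((Zx x0 w, C w) == (z0, c))].
    rewrite /s (@Pr_part _ _ p _ _ (Zx (~~x0))); apply: eq_bigr => z _; apply: Pr_ext => w /=.
    rewrite !xpair_eqE; case: (eqVneq (X w) x0) => [e|ne].
      have [-> ->] := hcons _ _ e; rewrite ?e ?eqxx /=; bcase.
    by rewrite /= ?andbF.
  have -> : t = \sum_(z : TZ) Pr p [pred w | ((X w, Zx (~~ x0) w) == (x0, z)) && ((Zx x0 w, C w) == (z0, c))].
    rewrite /t (@Pr_part _ _ p _ _ (Zx (~~x0))); apply: eq_bigr => z _; apply: Pr_ext => w /=.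
    rewrite !xpair_eqE; case: (eqVneq (X w) x0) => [e|ne].
      have [_ ->] := hcons _ _ e; rewrite ?e ?eqxx /=; bcase.
    by rewrite /= ?andbF.
  rewrite mulr_suml mulr_sumr; apply: eq_bigr => z _.
  by have := hind y0 (x0, z) (z0, c); rewrite /= Eu Ev.
have u0 : 0 <= u by apply: Pr_ge0.
have m0 : 0 <= m by apply: Pr_ge0.
have r0 : 0 <= r by apply: Pr_ge0.
have mu : m <= u by apply: Pr_le => // w /=; bcase.
have ru : r <= u by apply: Pr_le => // w /=; bcase.
case: (eqVneq u 0) => [u00|unz].
  have -> : m = 0 by apply/eqP; rewrite eq_le m0 -u00 mu.
  have -> : r = 0 by apply/eqP; rewrite eq_le r0 -u00 ru.
  by rewrite !mulr0 mul0r.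
apply: (mulIf unz).
by rewrite mulrAC H1 (mulrAC s) H2; ring.
Qed.

Ltac pw hcons X Yx C c x y w := let e1 := fresh "e1" in have [e1 _] := hcons (X w) w erefl; rewrite -?e1;
  case: (x); case: (y); case: (X w); case: (Yx true w); case: (Yx false w); case: (C w == c);
  rewrite /= ?(addr0,add0r) //; try lra.
Theorem theorem2 (R : realFieldType) (Omega : finType) (p : Omega -> R)
  (TC TZ : finType)
  (X Y : Omega -> bool) (C : Omega -> TC) (Z : Omega -> TZ)
  (Yx : bool -> Omega -> bool) (Zx : bool -> Omega -> TZ)
  (x y : bool) (c : TC) (beta gamma theta delta : R) :
  is_dist p ->
  (* consistency: X = x0 implies Y_x0 = Y and Z_x0 = Z *)
  (forall x0 w, X w = x0 -> Yx x0 w = Y w /\ Zx x0 w = Z w) ->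
  (* for all x0 <> x0' : Y_x0 independent of (X, Z_x0') given (Z_x0, C) *)
  (forall x0 : bool, cond_indep p (Yx x0) (fun w => (X w, Zx (~~ x0) w))
                                (fun w => (Zx x0 w, C w))) ->
  0 < Pr p [pred w | C w == c] ->
  (* the conditional probabilities P(y | z, x, c), P(y' | z', x', c) are defined *)
  (forall z : TZ, 0 < Pr p [pred w | (Z w == z) && (X w == x) && (C w == c)]) ->
  (forall z : TZ, 0 < Pr p [pred w | (Z w == z) && (X w == ~~ x) && (C w == c)]) ->
  let x' := ~~ x in
  let y' := ~~ y in
  let Pc (A : pred Omega) := cPr p A [pred w | C w == c] in
  let Pyx := Pc [pred w | Yx x w == y] in
  let Pyx' := Pc [pred w | Yx x' w == y] in
  let Py'x' := Pc [pred w | Yx x' w == y'] in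
  let Py := Pc [pred w | Y w == y] in
  let f := beta * Pc [pred w | (Yx x w == y) && (Yx x' w == y')]
         + gamma * Pc [pred w | (Yx x w == y) && (Yx x' w == y)]
         + theta * Pc [pred w | (Yx x w == y') && (Yx x' w == y')]
         + delta * Pc [pred w | (Yx x' w == y) && (Yx x w == y')] in
  let sigma := beta - gamma - theta + delta in
  let W := (gamma - delta) * Pyx + delta * Pyx' + theta * Py'x' in
  let L := Num.max 0 (Num.max (Pyx - Pyx') (Num.max (Py - Pyx') (Pyx - Py))) in
  let U := Num.min Pyx (Num.min Py'x'
             (Num.min (Pc [pred w | (Y w == y) && (X w == x)]
                       + Pc [pred w | (Y w == y') && (X w == x')])
             (Num.min (Pyx - Pyx' + Pc [pred w | (Y w == y) && (X w == x')]
                                  + Pc [pred w | (Y w == y') && (X w == x)])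
                (\sum_(z : TZ) \sum_(z' : TZ)
                   Num.min (cPr p [pred w | Y w == y]
                              [pred w | (Z w == z) && (X w == x) && (C w == c)])
                           (cPr p [pred w | Y w == y']
                              [pred w | (Z w == z') && (X w == x') && (C w == c)])
                 * Num.min (Pc [pred w | Zx x w == z]) (Pc [pred w | Zx x' w == z']))))) in
  (sigma < 0 -> W + sigma * U <= f <= W + sigma * L) /\
  (0 < sigma -> W + sigma * L <= f <= W + sigma * U).
Proof.
move=> [p0 p1] hcons hind hK hZx hZx' x' y' Pc Pyx Pyx' Py'x' Py f sigma W L U.
subst x' y'.
set K := Pr p [pred w | C w == c].
set k := K^-1.
have hk : 0 < k by rewrite invr_gt0.
have PcE : forall A : pred Omega, Pc A = Pr p [pred w | A w && (C w == c)] * k.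
  by move=> A; rewrite /Pc /cPr; congr (_ * _); apply: Pr_ext.
set a := Pc [pred w | (Yx x w == y) && (Yx (~~x) w == ~~y)].
have E1 : Pyx = a + Pc [pred w | (Yx x w == y) && (Yx (~~x) w == y)].
  rewrite /Pyx /a !PcE -mulrDl; congr (_ * _); rewrite !Pr_sum -big_split.
  apply: eq_bigr => w _ /=; rewrite -mulrDr; congr (_ * _); pw hcons X Yx C c x y w.
have E2 : Pyx' = Pc [pred w | (Yx x w == y) && (Yx (~~x) w == y)] + Pc [pred w | (Yx (~~x) w == y) && (Yx x w == ~~y)].
  rewrite /Pyx' !PcE -mulrDl; congr (_ * _); rewrite !Pr_sum -big_split.
  apply: eq_bigr => w _ /=; rewrite -mulrDr; congr (_ * _); pw hcons X Yx C c x y w.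
have E3 : Py'x' = a + Pc [pred w | (Yx x w == ~~y) && (Yx (~~x) w == ~~y)].
  rewrite /Py'x' /a !PcE -mulrDl; congr (_ * _); rewrite !Pr_sum -big_split.
  apply: eq_bigr => w _ /=; rewrite -mulrDr; congr (_ * _); pw hcons X Yx C c x y w.
have Pc0 : forall A, 0 <= Pc A.
  by move=> A; rewrite PcE; apply: mulr_ge0; [apply: Pr_ge0|apply: ltW].
have key : f = W + sigma * a.
  rewrite /f /W /sigma E1 E2 E3 -/a.
  have rl : forall A B D E : R, beta * A + gamma * B + theta * D + delta * E =
    (gamma - delta) * (A + B) + delta * (B + E) + theta * (A + D) + (beta - gamma - theta + delta) * A.
    by move=> *; ring.
  by rewrite rl.
have hL : L <= a.
  have i3 : Py <= a + Pyx'.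
    rewrite /Py /a /Pyx' !PcE -!mulrDl; apply: ler_wpM2r; first exact: ltW.
    rewrite !Pr_sum -!big_split; apply: ler_sum => w _ /=; rewrite -!mulrDr.
    apply: ler_wpM2l; first exact: p0.
    pw hcons X Yx C c x y w.
  have i4 : Pyx <= a + Py.
    rewrite /Py /a /Pyx !PcE -!mulrDl; apply: ler_wpM2r; first exact: ltW.
    rewrite !Pr_sum -!big_split; apply: ler_sum => w _ /=; rewrite -!mulrDr.
    apply: ler_wpM2l; first exact: p0.
    pw hcons X Yx C c x y w.
  have e0 := Pc0 [pred w | (Yx (~~x) w == y) && (Yx x w == ~~y)].
  have l1 : 0 <= a by exact: Pc0.
  have l2 : Pyx - Pyx' <= a.
    by rewrite E1 E2 opprD addrA addrK lerBlDr lerDl.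
  have l3 : Py - Pyx' <= a by rewrite lerBlDr.
  have l4 : Pyx - Py <= a by rewrite lerBlDr.
  by rewrite /L !ge_max l1 l2 l3 l4.
have hU4 : a <= U.
  have b0 := Pc0 [pred w | (Yx x w == y) && (Yx (~~x) w == y)].
  have d0 := Pc0 [pred w | (Yx x w == ~~y) && (Yx (~~x) w == ~~y)].
  have u1 : a <= Pyx by rewrite E1 lerDl.
  have u2 : a <= Py'x' by rewrite E3 lerDl.
  have u3 : a <= Pc [pred w | (Y w == y) && (X w == x)] + Pc [pred w | (Y w == ~~y) && (X w == ~~x)].
    rewrite /a !PcE -!mulrDl; apply: ler_wpM2r; first exact: ltW.
    rewrite !Pr_sum -!big_split; apply: ler_sum => w _ /=; rewrite -!mulrDr.
    apply: ler_wpM2l; first exact: p0.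
    pw hcons X Yx C c x y w.
  have u4 : a <= Pyx - Pyx' + Pc [pred w | (Y w == y) && (X w == ~~x)] + Pc [pred w | (Y w == ~~y) && (X w == x)].
    have i : a + Pyx' <= Pyx + Pc [pred w | (Y w == y) && (X w == ~~x)] + Pc [pred w | (Y w == ~~y) && (X w == x)].
      rewrite /a /Pyx /Pyx' !PcE -!mulrDl; apply: ler_wpM2r; first exact: ltW.
      rewrite !Pr_sum -!big_split; apply: ler_sum => w _ /=; rewrite -!mulrDr.
      apply: ler_wpM2l; first exact: p0.
      pw hcons X Yx C c x y w.
    move: i; move: (a) (Pyx) (Pyx') (Pc [pred w | (Y w == y) && (X w == ~~x)]) (Pc [pred w | (Y w == ~~y) && (X w == x)]).
    move=> *; lra.
  have u5 : a <= \sum_(z : TZ) \sum_(z' : TZ)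
                   Num.min (cPr p [pred w | Y w == y]
                              [pred w | (Z w == z) && (X w == x) && (C w == c)])
                           (cPr p [pred w | Y w == ~~y]
                              [pred w | (Z w == z') && (X w == ~~x) && (C w == c)])
                 * Num.min (Pc [pred w | Zx x w == z]) (Pc [pred w | Zx (~~x) w == z']).
    rewrite /a PcE (@Pr_part _ _ p _ _ (Zx x)) mulr_suml; apply: ler_sum => z _.
    rewrite (@Pr_part _ _ p _ _ (Zx (~~x))) mulr_suml; apply: ler_sum => z' _.
    set q := Pr p _.
    have G1 := @indep_step _ _ p _ _ X Y C Z Yx Zx c x y z z' p0 hcons (hind x) (hZx z).
    have G2 := @indep_step _ _ p _ _ X Y C Z Yx Zx c (~~x) (~~y) z' z p0 hcons (hind (~~x)) (hZx' z').
    rewrite negbK in G2.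
    move: G1 G2.
    set rA := Pr p _. set tA := Pr p _. set sA := Pr p _. set m := Pr p _.
    set rB := Pr p _. set tB := Pr p _. set sB := Pr p _. set mB := Pr p _.
    move=> G1 G2.
    have emB : mB = m by apply: Pr_ext => w /=; bcase.
    have hq1 : q <= rA by apply: Pr_le => // w /=; bcase.
    have hq2 : q <= rB by apply: Pr_le => // w /=; bcase.
    have tA0 : tA != 0 by rewrite gt_eqF // hZx.
    have tB0 : tB != 0 by rewrite gt_eqF // hZx'.
    have eA : rA = sA / tA * m by rewrite -[rA](mulfK tA0) G1 mulrAC.
    have eB : rB = sB / tB * m by rewrite -[rB](mulfK tB0) G2 emB mulrAC.
    have -> : cPr p [pred w | Y w == y] [pred w | (Z w == z) && (X w == x) && (C w == c)] = sA / tA by [].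
    have -> : cPr p [pred w | Y w == ~~y] [pred w | (Z w == z') && (X w == ~~x) && (C w == c)] = sB / tB by [].
    have hm1 : m * k <= Pc [pred w | Zx x w == z].
      rewrite PcE; apply: ler_wpM2r; first exact: ltW.
      by apply: Pr_le => // w /=; bcase.
    have hm2 : m * k <= Pc [pred w | Zx (~~x) w == z'].
      rewrite PcE; apply: ler_wpM2r; first exact: ltW.
      by apply: Pr_le => // w /=; bcase.
    have hM : m * k <= Num.min (Pc [pred w | Zx x w == z]) (Pc [pred w | Zx (~~x) w == z']) by rewrite le_min hm1 hm2.
    have A0 : 0 <= sA / tA by apply: divr_ge0; apply: Pr_ge0.
    have B0 : 0 <= sB / tB by apply: divr_ge0; apply: Pr_ge0.
    have k0 : 0 <= k by apply: ltW.
    have qA : q * k <= sA / tA * (m * k).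
      by rewrite mulrA -eA; apply: ler_wpM2r.
    have qB : q * k <= sB / tB * (m * k).
      by rewrite mulrA -eB; apply: ler_wpM2r.
    move: hM qA qB A0 B0; move: (Num.min _ _) => Mn hM qA qB A0 B0.
    case: (leP (sA / tA) (sB / tB)) => _.
      by apply: le_trans qA _; apply: ler_wpM2l.
    by apply: le_trans qB _; apply: ler_wpM2l.
  by rewrite /U !le_min u1 u2 u3 u4 u5.
rewrite key; split => hs; apply/andP; split; rewrite lerD2l.
- by apply: ler_wnM2l => //; apply: ltW.
- by apply: ler_wnM2l => //; apply: ltW.
- by apply: ler_wpM2l => //; apply: ltW.
- by apply: ler_wpM2l => //; apply: ltW.
Qed.
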